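(* Let $G>I$ be a finite group with $Z(G)=I$ and let $(2A,3A,C)$ be a class vector of $G$ with $l^i(2A,3A,C)>0$, where $2A$ is a class of involutions and $3A$ is a class of elements of order $3$. Then $\Sigma^i(C,C,C,2A)$ contains $B_4$-orbits of length $4$. In addition, $l^i(C,C,3A^{-1})>0$, where $3A^{-1}=\{\tau^{-1}:\tau\in 3A\}$.
   Context: $\iota$ is the identity and $I$ the trivial group. A class vector is a tuple of non-trivial conjugacy classes. $\Sigma^i(C_1,\dots,C_m)$ is the set of $G$-conjugacy classes $[\sigma_1,\dots,\sigma_m]$ (simultaneous conjugation) of tuples with $\sigma_j\in C_j$, $\langle\sigma_1,\dots,\sigma_m\rangle=G$, $\sigma_1\cdots\sigma_m=\iota$, and $l^i(C_1,\dots,C_m)=|\Sigma^i(C_1,\dots,C_m)|$. The Hurwitz braid group $H_4=\langle\beta_2,\beta_3,\beta_4\rangle$ acts from the right by $[\underline{\sigma}]^{\beta_2}=[\sigma_1\sigma_2\sigma_1^{-1},\sigma_1,\sigma_3,\sigma_4]$, $[\underline{\sigma}]^{\beta_3}=[\sigma_1,\sigma_2\sigma_3\sigma_2^{-1},\sigma_2,\sigma_4]$, $[\underline{\sigma}]^{\beta_4}=[\sigma_1,\sigma_2,\sigma_3\sigma_4\sigma_3^{-1},\sigma_3]$, and the pure braid group $B_4$ is generated by $\beta_{12}=\beta_2^2$, $\beta_{13}=\beta_2^{-1}\beta_3^2\beta_2$, $\beta_{14}=\beta_2^{-1}\beta_3^{-1}\beta_4^2\beta_3\beta_2$, $\beta_{23}=\beta_3^2$,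 $\beta_{24}=\beta_3^{-1}\beta_4^2\beta_3$, $\beta_{34}=\beta_4^2$; it preserves each $\Sigma^i(C_1,\dots,C_4)$. *)

(* Defs.v *)
From mathcomp Require Import all_boot all_fingroup all_solvable.
Set Implicit Arguments. Unset Strict Implicit. Unset Printing Implicit Defensive.
Local Open Scope group_scope.

Section Braid.
Variable gT : finGroupType.

Definition T3 := (gT * gT * gT)%type.
Definition T4 := (gT * gT * gT * gT)%type.

Definition s1 (t : T4) := t.1.1.1.
Definition s2 (t : T4) := t.1.1.2.
Definition s3 (t : T4) := t.1.2.
Definition s4 (t : T4) := t.2.

Definition tconj3 (t : T3) (g : gT) : T3 := (t.1.1 ^ g, t.1.2 ^ g, t.2 ^ g).
Definition tconj4 (t : T4) (g : gT) : T4 := (s1 t ^ g, s2 t ^ g, s3 t ^ g, s4 t ^ g).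

Definition tclass3 (G : {set gT}) (t : T3) : {set T3} := [set tconj3 t g | g in G].
Definition tclass4 (G : {set gT}) (t : T4) : {set T4} := [set tconj4 t g | g in G].

Definition gtuples3 (G C1 C2 C3 : {set gT}) : {set T3} :=
  [set t : T3 | [&& t.1.1 \in C1, t.1.2 \in C2, t.2 \in C3,
     <<[set t.1.1; t.1.2; t.2]>> == G & t.1.1 * t.1.2 * t.2 == 1]].
Definition gtuples4 (G C1 C2 C3 C4 : {set gT}) : {set T4} :=
  [set t : T4 | [&& s1 t \in C1, s2 t \in C2, s3 t \in C3, s4 t \in C4,
     <<[set s1 t; s2 t; s3 t; s4 t]>> == G & s1 t * s2 t * s3 t * s4 t == 1]].

Definition Sigma3 (G C1 C2 C3 : {set gT}) : {set {set T3}} :=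
  [set tclass3 G t | t in gtuples3 G C1 C2 C3].
Definition Sigma4 (G C1 C2 C3 C4 : {set gT}) : {set {set T4}} :=
  [set tclass4 G t | t in gtuples4 G C1 C2 C3 C4].
Definition l3 (G C1 C2 C3 : {set gT}) : nat := #|Sigma3 G C1 C2 C3|.

(* Hurwitz braid generators (right action) and their inverses;
   note x ^ y = y^-1 * x * y in MathComp *)
Definition b2 (t : T4) : T4 := (s1 t * s2 t * (s1 t)^-1, s1 t, s3 t, s4 t).
Definition b3 (t : T4) : T4 := (s1 t, s2 t * s3 t * (s2 t)^-1, s2 t, s4 t).
Definition b4 (t : T4) : T4 := (s1 t, s2 t, s3 t * s4 t * (s3 t)^-1, s3 t).
Definition b2i (t : T4) : T4 := (s2 t, (s2 t)^-1 * s1 t * s2 t, s3 t, s4 t).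
Definition b3i (t : T4) : T4 := (s1 t, s3 t, (s3 t)^-1 * s2 t * s3 t, s4 t).
Definition b4i (t : T4) : T4 := (s1 t, s2 t, s4 t, (s4 t)^-1 * s3 t * s4 t).

(* pure braid generators; right action: [s]^(x y) = ([s]^x)^y *)
Definition beta12 (t : T4) : T4 := b2 (b2 t).
Definition beta13 (t : T4) : T4 := b2 (b3 (b3 (b2i t))).
Definition beta14 (t : T4) : T4 := b2 (b3 (b4 (b4 (b3i (b2i t))))).
Definition beta23 (t : T4) : T4 := b3 (b3 t).
Definition beta24 (t : T4) : T4 := b3 (b4 (b4 (b3i t))).
Definition beta34 (t : T4) : T4 := b4 (b4 t).

Definition pure_gens : seq (T4 -> T4) :=
  [:: beta12; beta13; beta14; beta23; beta24; beta34].

Definition brstep (G : {set gT}) : rel T4 := fun t t' =>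
  (t' \in tclass4 G t) || has (fun f => (t' == f t) || (t == f t')) pure_gens.

Definition B4orbit (G : {set gT}) (t : T4) : {set {set T4}} :=
  [set tclass4 G t' | t' in [set t' | connect (brstep G) t t']].

End Braid.

(* Main.v *)
Require Import Defs.
From mathcomp Require Import all_boot all_fingroup all_solvable.
Set Implicit Arguments. Unset Strict Implicit. Unset Printing Implicit Defensive.
Definition push (x : nat) (s : seq nat) : seq nat :=
 match x, s with
 | 0, 0 :: s' => s'
 | 1, 1 :: s' => 2 :: s'
 | 1, 2 :: s' => s'
 | 2, 2 :: s' => 1 :: s'
 | 2, 1 :: s' => s'
 | _, _ => x :: s end.
Fixpoint red (w : seq nat) : seq nat := if w is x :: w' then push x (red w') else [::].
Definition invl (x : nat) : nat := if x is 0 then 0 else if x is 1 then 2 else 1.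
Definition invw (w : seq nat) := rev (map invl w).

Inductive term := TW of seq nat | TM of term & term | TI of term | TC of term & term.
Fixpoint word (t : term) : seq nat :=
  match t with TW w => w | TM x y => word x ++ word y | TI x => invw (word x)
  | TC x g => invw (word g) ++ word x ++ word g end.

Definition tt4 := (term * term * term * term)%type.
Definition check4 (X Y : tt4) :=
  [&& red (word X.1.1.1) == red (word Y.1.1.1), red (word X.1.1.2) == red (word Y.1.1.2),
      red (word X.1.2) == red (word Y.1.2) & red (word X.2) == red (word Y.2)].

Definition B2 (X : tt4) : tt4 := (TM (TM X.1.1.1 X.1.1.2) (TI X.1.1.1), X.1.1.1, X.1.2, X.2).
Definition B3 (X : tt4) : tt4 := (X.1.1.1, TM (TM X.1.1.2 X.1.2) (TI X.1.1.2), X.1.1.2, X.2).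
Definition B4 (X : tt4) : tt4 := (X.1.1.1, X.1.1.2, TM (TM X.1.2 X.2) (TI X.1.2), X.1.2).
Definition B2i (X : tt4) : tt4 := (X.1.1.2, TM (TM (TI X.1.1.2) X.1.1.1) X.1.1.2, X.1.2, X.2).
Definition B3i (X : tt4) : tt4 := (X.1.1.1, X.1.2, TM (TM (TI X.1.2) X.1.1.2) X.1.2, X.2).
Definition B4i (X : tt4) : tt4 := (X.1.1.1, X.1.1.2, X.2, TM (TM (TI X.2) X.1.2) X.2).
Definition Bt12 X := B2 (B2 X).
Definition Bt13 X := B2 (B3 (B3 (B2i X))).
Definition Bt14 X := B2 (B3 (B4 (B4 (B3i (B2i X))))).
Definition Bt23 X := B3 (B3 X).
Definition Bt24 X := B3 (B4 (B4 (B3i X))).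
Definition Bt34 X := B4 (B4 X).
Definition C4 (X : tt4) g : tt4 := (TC X.1.1.1 g, TC X.1.1.2 g, TC X.1.2 g, TC X.2 g).

Definition wBa := [:: 2; 0]. Definition waB := [:: 0; 2].
Definition wbab := [:: 1; 0; 1]. Definition wBab := [:: 2; 0; 1].
Definition wbaB := [:: 1; 0; 2].
Definition R (i : nat) : tt4 :=
  match i with
  | 0 => (TW wBa, TW waB, TW wbab, TW wBab)
  | 1 => (TW waB, TW wbab, TW wbab, TW wBab)
  | 2 => (TW wbab, TW waB, TW wbab, TW wbaB)
  | _ => (TW wBa, TW wBa, TW wbab, TW [:: 2;0;2;0;1;0;1])
  end.

Definition Bgens : seq (tt4 -> tt4) := [:: Bt12; Bt13; Bt14; Bt23; Bt24; Bt34].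
Definition tab (i k : nat) : nat * seq nat :=
  match i, k with
  | 0, 0 => (1, [::]) | 0, 1 => (0, [::]) | 0, 2 => (2, [::]) | 0, 3 => (2, [:: 2])
  | 0, 4 => (3, [::]) | 0, _ => (1, [:: 1])
  | 1, 0 => (2, [:: 1;0;1]) | 1, 1 => (3, [:: 2;0;2;0;1]) | 1, 2 => (1, [:: 1;0;2;0;1])
  | 1, 3 => (1, [::]) | 1, 4 => (0, [:: 2;0;2]) | 1, _ => (2, [:: 1;0;2])
  | 2, 0 => (0, [:: 2;0;2]) | 2, 1 => (1, [:: 1]) | 2, 2 => (3, [:: 2;0;2])
  | 2, 3 => (3, [:: 2;0;1]) | 2, 4 => (2, [:: 1;0;2;0;1]) | 2, _ => (0, [:: 0;2])
  | _, 0 => (3, [::]) | _, 1 => (2, [:: 1;0;1;0;1]) | _, 2 => (0, [:: 1;0;1])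
  | _, 3 => (0, [:: 0;1]) | _, 4 => (1, [:: 1;0;1]) | _, _ => (3, [:: 2;0;2;0])
  end.
Definition tabcheck : bool :=
  all (fun i => all (fun k => check4 (nth id Bgens k (R i)) (C4 (R (tab i k).1) (TW (tab i k).2)))
     (iota 0 6)) (iota 0 4).
Lemma tabcheckP : tabcheck.
Proof. by vm_compute. Qed.

Local Open Scope group_scope.
Section Ev.
Variables (gT : finGroupType) (a b : gT).
Hypotheses (Ha : a * a = 1) (Hb : b * b * b = 1).

Definition ev (n : nat) : gT := if n is 0 then a else if n is 1 then b else b^-1.
Fixpoint eval (w : seq nat) : gT := if w is x :: w' then ev x * eval w' else 1.
Fixpoint interp (t : term) : gT :=
  match t with TW w => eval w | TM x y => interp x * interp y | TI x => (interp x)^-1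
  | TC x g => interp x ^ interp g end.
Definition interp4 (X : tt4) : T4 gT := (interp X.1.1.1, interp X.1.1.2, interp X.1.2, interp X.2).

Lemma Hbi : b^-1 = b * b.
Proof. by apply: (@mulgI _ b); rewrite mulgV mulgA Hb. Qed.
Lemma Hai : a^-1 = a.
Proof. by apply: (@mulgI _ a); rewrite mulgV Ha. Qed.

Lemma eval_push x s : eval (push x s) = ev x * eval s.
Proof.
case: x => [|[|[|x]]]; case: s => [|[|[|[|y]]] s] //=;
  rewrite ?mulgA ?Ha ?mul1g ?mulgV ?mulVg ?mul1g //.
- by rewrite Hbi.
- by rewrite Hbi !mulgA Hb mul1g.
Qed.
Lemma eval_red w : eval (red w) = eval w.
Proof. by elim: w => //= x w IH; rewrite eval_push IH. Qed.
Lemma eval_cat u v : eval (u ++ v) = eval u * eval v.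
Proof. by elim: u => /= [|x u IH]; rewrite ?mul1g // IH mulgA. Qed.
Lemma ev_inv x : ev (invl x) = (ev x)^-1.
Proof. by case: x => [|[|[|x]]] /=; rewrite ?Hai ?invgK. Qed.
Lemma eval_invw w : eval (invw w) = (eval w)^-1.
Proof.
elim: w => /= [|x w IH]; first by rewrite invg1.
by rewrite /invw /= rev_cons -cats1 eval_cat -/(invw w) IH /= mulg1 ev_inv invMg.
Qed.
Lemma interp_word t : interp t = eval (word t).
Proof.
elim: t => //= [x IHx y IHy|x IHx|x IHx g IHg]; rewrite ?eval_cat ?eval_invw -?IHx -?IHy ?IHg //.
Qed.
Lemma term_eq x y : red (word x) == red (word y) -> interp x = interp y.
Proof. by move/eqP=> E; rewrite !interp_word -eval_red E eval_red. Qed.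
Lemma check4_sound X Y : check4 X Y -> interp4 X = interp4 Y.
Proof.
case/and4P=> /term_eq E1 /term_eq E2 /term_eq E3 /term_eq E4.
by rewrite /interp4 E1 E2 E3 E4.
Qed.
End Ev.
Local Open Scope group_scope.

Section Gen.
Variable gT : finGroupType.
Implicit Types (t : T4 gT) (g h : gT).

Lemma tconj4M t g h : tconj4 (tconj4 t g) h = tconj4 t (g * h).
Proof. by rewrite /tconj4 /s1 /s2 /s3 /s4 /= !conjgM. Qed.
Lemma tconj41 t : tconj4 t 1 = t.
Proof. by case: t => [[[x1 x2] x3] x4]; rewrite /tconj4 /s1 /s2 /s3 /s4 /= !conjg1. Qed.

Lemma b2J t g : b2 (tconj4 t g) = tconj4 (b2 t) g.
Proof. by rewrite /b2 /tconj4 /s1 /s2 /s3 /s4 /= !conjMg conjVg. Qed.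
Lemma b3J t g : b3 (tconj4 t g) = tconj4 (b3 t) g.
Proof. by rewrite /b3 /tconj4 /s1 /s2 /s3 /s4 /= !conjMg conjVg. Qed.
Lemma b4J t g : b4 (tconj4 t g) = tconj4 (b4 t) g.
Proof. by rewrite /b4 /tconj4 /s1 /s2 /s3 /s4 /= !conjMg conjVg. Qed.
Lemma b2iJ t g : b2i (tconj4 t g) = tconj4 (b2i t) g.
Proof. by rewrite /b2i /tconj4 /s1 /s2 /s3 /s4 /= !conjMg conjVg. Qed.
Lemma b3iJ t g : b3i (tconj4 t g) = tconj4 (b3i t) g.
Proof. by rewrite /b3i /tconj4 /s1 /s2 /s3 /s4 /= !conjMg conjVg. Qed.
Lemma b4iJ t g : b4i (tconj4 t g) = tconj4 (b4i t) g.
Proof. by rewrite /b4i /tconj4 /s1 /s2 /s3 /s4 /= !conjMg conjVg. Qed.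

Lemma gK1 (x y : gT) : x^-1 * (x * y * x^-1) * x = y.
Proof. by rewrite !mulgA mulVg mul1g mulgKV. Qed.
Lemma gK2 (x y : gT) : x * (x^-1 * y * x) * x^-1 = y.
Proof. by rewrite !mulgA mulgV mul1g mulgK. Qed.
Lemma b2K : cancel (@b2 gT) (@b2i gT).
Proof. by case=> [[[x1 x2] x3] x4]; rewrite /b2 /b2i /s1 /s2 /s3 /s4 /= gK1. Qed.
Lemma b3K : cancel (@b3 gT) (@b3i gT).
Proof. by case=> [[[x1 x2] x3] x4]; rewrite /b3 /b3i /s1 /s2 /s3 /s4 /= gK1. Qed.
Lemma b4K : cancel (@b4 gT) (@b4i gT).
Proof. by case=> [[[x1 x2] x3] x4]; rewrite /b4 /b4i /s1 /s2 /s3 /s4 /= gK1. Qed.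
Lemma b2iK : cancel (@b2i gT) (@b2 gT).
Proof. by case=> [[[x1 x2] x3] x4]; rewrite /b2 /b2i /s1 /s2 /s3 /s4 /= gK2. Qed.
Lemma b3iK : cancel (@b3i gT) (@b3 gT).
Proof. by case=> [[[x1 x2] x3] x4]; rewrite /b3 /b3i /s1 /s2 /s3 /s4 /= gK2. Qed.
Lemma b4iK : cancel (@b4i gT) (@b4 gT).
Proof. by case=> [[[x1 x2] x3] x4]; rewrite /b4 /b4i /s1 /s2 /s3 /s4 /= gK2. Qed.

Lemma gens_J k t g : k < 6 -> nth id (pure_gens gT) k (tconj4 t g) = tconj4 (nth id (pure_gens gT) k t) g.
Proof.
case: k => [|[|[|[|[|[|k]]]]]] //= _;
  by rewrite /beta12 /beta13 /beta14 /beta23 /beta24 /beta34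
    ?b2J ?b3J ?b4J ?b2iJ ?b3iJ ?b4iJ ?b2J ?b3J ?b4J ?b2iJ ?b3iJ ?b4iJ ?b2J ?b3J ?b4J ?b2J ?b3J ?b4J.
Qed.

Lemma gens_inj k : k < 6 -> injective (nth id (pure_gens gT) k).
Proof.
have i2 := can_inj b2K; have i3 := can_inj b3K; have i4 := can_inj b4K.
have i2i := can_inj b2iK; have i3i := can_inj b3iK; have i4i := can_inj b4iK.
case: k => [|[|[|[|[|[|k]]]]]] //= _; rewrite /beta12 /beta13 /beta14 /beta23 /beta24 /beta34;
  repeat apply: inj_comp => //.
Qed.
End Gen.

Section Orb.
Variables (gT : finGroupType) (G : {group gT}) (a b : gT).
Hypotheses (aG : a \in G) (bG : b \in G) (Ha : a * a = 1) (Hb : b * b * b = 1)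
  (nc : a * b != b * a).

Definition r i := interp4 a b (R i).
Definition S := \bigcup_(i < 4) tclass4 G (r i).

Lemma evalG w : eval a b w \in G.
Proof. by elim: w => [|x w IH] /=; rewrite ?group1 // groupM // ; case: x => [|[|x]] //=; rewrite groupV. Qed.

Lemma nthB k X : k < 6 -> nth id (pure_gens gT) k (interp4 a b X) = interp4 a b (nth id Bgens k X).
Proof. by case: k => [|[|[|[|[|[|k]]]]]]. Qed.

Lemma tab_lt i k : (tab i k).1 < 4.
Proof. by case: i => [|[|[|i]]]; case: k => [|[|[|[|[|[|k]]]]]]. Qed.

Lemma tab_eq i k : i < 4 -> k < 6 ->
  nth id (pure_gens gT) k (r i) = tconj4 (r (tab i k).1) (eval a b (tab i k).2).
Proof.
move=> Hi Hk; have := tabcheckP; rewrite /tabcheck => /allP/(_ i).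
rewrite mem_iota add0n Hi => /(_ isT) /allP/(_ k); rewrite mem_iota add0n Hk => /(_ isT).
move/(check4_sound Ha Hb); rewrite /r nthB // => ->; by [].
Qed.

Lemma tclass_conj t g : g \in G -> tclass4 G (tconj4 t g) = tclass4 G t.
Proof.
move=> gG; apply/setP=> u; apply/imsetP/imsetP => [[h hG ->] | [h hG ->]].
  by exists (g * h); rewrite ?groupM // tconj4M.
by exists (g^-1 * h); rewrite ?groupM ?groupV // tconj4M mulKVg.
Qed.

Lemma memS t : reflect (exists i : 'I_4, exists2 g, g \in G & t = tconj4 (r i) g) (t \in S).
Proof.
apply: (iffP bigcupP) => [[i _ /imsetP [g gG ->]] | [i [g gG ->]]]; first by exists i; exists g.
by exists i => //; apply: imset_f.
Qed.

Lemma S_conj t g : t \in S -> g \in G -> tconj4 t g \in S.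
Proof.
move=> /memS [i [h hG ->]] gG; apply/memS; exists i; exists (h * g); rewrite ?groupM //.
by rewrite tconj4M.
Qed.

Lemma S_gen k t : k < 6 -> t \in S -> nth id (pure_gens gT) k t \in S.
Proof.
move=> Hk /memS [i [g gG ->]]; rewrite gens_J // tab_eq // tconj4M.
apply/memS; exists (Ordinal (tab_lt i k)); exists (eval a b (tab i k).2 * g) => //.
by rewrite groupM // evalG.
Qed.

Lemma S_genV k t : k < 6 -> nth id (pure_gens gT) k t \in S -> t \in S.
Proof.
move=> Hk Ht; set f := nth id (pure_gens gT) k in Ht.
have finj : injective f := gens_inj Hk.
have sub : f @: S \subset S by apply/subsetP=> u /imsetP [v vS ->]; apply: S_gen.
have := subset_cardP (card_imset S finj) sub => /(_ (f t)); rewrite Ht.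
by case/imsetP=> v vS /finj ->.
Qed.

Lemma S_closed : closed (brstep G) S.
Proof.
move=> x y; rewrite /brstep; case/orP => [/imsetP [g gG ->] | /(has_nthP id) [k Hk]].
  apply/idP/idP => [xS|]; first exact: S_conj.
  by move/S_conj/(_ (groupVr gG)); rewrite tconj4M mulgV tconj41.
case/orP => /eqP ->; apply/idP/idP; (try exact: S_gen); exact: S_genV.
Qed.

Lemma r0S : r 0 \in S.
Proof. by apply/memS; exists ord0; exists 1; rewrite ?tconj41. Qed.

Lemma orbitE : B4orbit G (r 0) = [set tclass4 G (r i) | i : 'I_4].
Proof.
apply/setP=> X; apply/imsetP/imsetP => [[t' Ht' ->] | [i _ ->]].
  have : t' \in S by rewrite -(closed_connect S_closed (_ : connect _ (r 0) t')) ?r0S //; rewrite inE in Ht'.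
  by case/memS=> i [g gG ->]; exists i; rewrite ?tclass_conj.
exists (r i) => //; rewrite inE.
have step k : k < 6 -> (tab 0 k).2 = [::] -> brstep G (r 0) (r (tab 0 k).1).
  move=> Hk E; apply/orP; right; apply/(has_nthP id); exists k => //.
  by rewrite tab_eq // E /= tconj41 eqxx.
case: i => [[|[|[|[|i]]]] Hi] //=.
- by apply: connect1; apply: (step 0).
- by apply: connect1; apply: (step 2).
- by apply: connect1; apply: (step 4).
Qed.

Definition pat (t : T4 gT) := [:: Defs.s1 t == Defs.s2 t; Defs.s1 t == Defs.s3 t; Defs.s2 t == Defs.s3 t].

Lemma pat_conj t g : pat (tconj4 t g) = pat t.
Proof. by rewrite /pat /tconj4 /Defs.s1 /Defs.s2 /Defs.s3 /Defs.s4 /= !(inj_eq (conjg_inj g)). Qed.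

Lemma tclass_pat x y : tclass4 G x = tclass4 G y -> pat x = pat y.
Proof.
move=> E; have : y \in tclass4 G x by rewrite E; apply/imsetP; exists 1; rewrite ?tconj41.
by case/imsetP=> g _ ->; rewrite pat_conj.
Qed.

Lemma nc_from u v w1 w2 : red (w1 ++ u ++ w2) = [:: 0; 1]%N -> red (w1 ++ v ++ w2) = [:: 1; 0]%N ->
  eval a b u != eval a b v.
Proof.
move=> H1 H2; apply/eqP=> E; move/eqP: nc; apply.
have : eval a b (w1 ++ u ++ w2) = eval a b (w1 ++ v ++ w2) by rewrite !(eval_cat a b) E.
by rewrite -(eval_red Ha Hb (w1 ++ u ++ w2)) -(eval_red Ha Hb (w1 ++ v ++ w2)) H1 H2 /= !mulg1.
Qed.

Lemma n1 : eval a b wBa != eval a b waB.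
Proof. by apply: (@nc_from _ _ [:: 1%N] [:: 1%N]). Qed.
Lemma n2 : eval a b wBa != eval a b wbab.
Proof. by rewrite eq_sym; apply: (@nc_from _ _ [:: 2%N] [::]). Qed.
Lemma n3 : eval a b waB != eval a b wbab.
Proof. by apply: (@nc_from _ _ [::] [:: 2%N]). Qed.

Lemma pat_inj : injective (fun i : 'I_4 => pat (r i)).
Proof.
have e1 : (b^-1 * (a * 1) == a * (b^-1 * 1)) = false := negbTE n1.
have e2 : (b^-1 * (a * 1) == b * (a * (b * 1))) = false := negbTE n2.
have e3 : (a * (b^-1 * 1) == b * (a * (b * 1))) = false := negbTE n3.
have e1' := e1; have e2' := e2; have e3' := e3.
rewrite eq_sym in e1'; rewrite eq_sym in e2'; rewrite eq_sym in e3'.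
move=> i j; case: i => [[|[|[|[|i]]]] Hi] //; case: j => [[|[|[|[|j]]]] Hj] //;
  rewrite /pat /r /interp4 /Defs.s1 /Defs.s2 /Defs.s3 /= ?eqxx ?e1 ?e2 ?e3 ?e1' ?e2' ?e3' //;
  first [by move=> _; exact/val_inj | by case].
Qed.



Lemma orbit_card : #|B4orbit G (r 0)| = 4.
Proof.
rewrite orbitE card_imset ?card_ord //.
by move=> i j /tclass_pat /pat_inj.
Qed.

End Orb.

Lemma inclass (gT : finGroupType) (G : {group gT}) (a b : gT) (Ha : a * a = 1) (Hb : b * b * b = 1)
  (aG : a \in G) (bG : b \in G) (w u g : seq nat) (x : gT) :
  red w == red (invw g ++ u ++ g) -> eval a b u = x -> eval a b w \in x ^: G.
Proof.
move=> E <-; have /= -> := @term_eq _ a b Ha Hb (TW w) (TC (TW u) (TW g)) E.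
exact/memJ_class/evalG.
Qed.

Theorem corollary5 (gT : finGroupType) (G : {group gT}) (A2 A3 C : {set gT}) :
  G :!=: 1 -> 'Z(G) = 1 ->
  A2 \in classes G -> A3 \in classes G -> C \in classes G ->
  A2 != 1 -> A3 != 1 -> C != 1 ->
  (forall x, x \in A2 -> #[x] = 2%N) ->
  (forall x, x \in A3 -> #[x] = 3%N) ->
  (0 < l3 G A2 A3 C)%N ->
  (exists2 t : T4 gT, tclass4 G t \in Sigma4 G C C C A2 & #|B4orbit G t| = 4%N)
  /\ (0 < l3 G C C [set x^-1 | x in A3])%N.
Proof.
move=> _ ZG A2cl _ Ccl _ _ _ o2 o3 /card_gt0P [X /imsetP [[[a b] c] tin _]].
rewrite inE /= in tin; case/and5P: tin => aA2 bA3 cC /eqP gen /eqP prod.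
have inH x : x \in [set a; b; c] -> x \in G by rewrite -gen => /mem_gen.
have aG : a \in G by apply: inH; rewrite !inE eqxx.
have bG : b \in G by apply: inH; rewrite !inE eqxx ?orbT.
have Ha : a * a = 1 by rewrite -expg2 -(o2 _ aA2) expg_order.
have Hb : b * b * b = 1 by rewrite -(expg_order b) (o3 _ bA3) !expgS expg0 mulg1 mulgA.
have cE : c = b^-1 * (a * 1).
  have : (a * b)^-1 * (a * b * c) = c by rewrite mulKg.
  by rewrite prod mulg1 invMg (Hai Ha) mulg1 => <-.
have nc : a * b != b * a.
  apply/eqP=> comm.
  have : b \in 'Z(G).
    rewrite /center inE bG /= -gen cent_gen; apply/centP => y; rewrite !inE.
    case/orP => [/orP [] |] /eqP ->; first exact/esym.
      exact: commute_refl.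
    rewrite cE; apply: commuteM; first by apply/commuteV/commute_refl.
    by rewrite mulg1.
  rewrite ZG inE => /eqP b1; move: (o3 _ bA3); rewrite b1 order1 //.
have Ceq : C = c ^: G.
  case/imsetP: Ccl => x0 x0G Ceq; rewrite Ceq in cC *; exact/esym/class_eqP.
have A2eq : A2 = a ^: G.
  case/imsetP: A2cl => x0 x0G Aeq; rewrite Aeq in aA2 *; exact/esym/class_eqP.
split.
  exists (r a b 0); last exact: orbit_card.
  apply: imset_f; rewrite inE /r /interp4 /Defs.s1 /Defs.s2 /Defs.s3 /Defs.s4 /=.
  rewrite Ceq A2eq cE.
  apply/and5P; split.
  - exact: (@inclass _ G a b Ha Hb aG bG [:: 2; 0]%N [:: 2; 0]%N [::]) => //.
  - exact: (@inclass _ G a b Ha Hb aG bG [:: 0; 2]%N [:: 2; 0]%N [:: 0]%N) => //.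
  - exact: (@inclass _ G a b Ha Hb aG bG [:: 1; 0; 1]%N [:: 2; 0]%N [:: 1]%N) => //.
  - have := @inclass _ G a b Ha Hb aG bG [:: 2; 0; 1]%N [:: 0]%N [:: 1]%N a isT (mulg1 a); exact.
  - apply/andP; split; last first.
      by apply/eqP; exact: (@term_eq _ a b Ha Hb (TM (TM (TM (TW [:: 2; 0]%N) (TW [:: 0; 2]%N))
         (TW [:: 1; 0; 1]%N)) (TW [:: 2; 0; 1]%N)) (TW [::]) isT).
    rewrite eqEsubset; apply/andP; split.
      rewrite gen_subG; apply/subsetP => y; rewrite !inE => /orP [/orP [/orP [] |] |] /eqP ->;
      by repeat (apply: groupM || rewrite groupV || apply: group1 || assumption).
    rewrite -gen gen_subG; set H := (X in _ \subset X).
    have s1H : b^-1 * (a * 1) \in H by apply: mem_gen; rewrite !inE eqxx.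
    have s4H : b^-1 * (a * (b * 1)) \in H by apply: mem_gen; rewrite !inE eqxx ?orbT.
    have Eb := @term_eq _ a b Ha Hb (TW [:: 1]%N) (TM (TI (TW [:: 2; 0]%N)) (TI (TW [:: 2; 0; 1]%N))) isT.
    have Ea := @term_eq _ a b Ha Hb (TW [:: 0]%N)
      (TM (TM (TI (TW [:: 2; 0]%N)) (TI (TW [:: 2; 0; 1]%N))) (TW [:: 2; 0]%N)) isT.
    simpl in Ea, Eb.
    apply/subsetP => y; rewrite !inE => /orP [/orP [] |] /eqP ->.
    + by rewrite -[a]mulg1 Ea; repeat (assumption || apply: groupM || rewrite groupV).
    + by rewrite -[b]mulg1 Eb; repeat (assumption || apply: groupM || rewrite groupV).
    + by rewrite cE.
apply/card_gt0P; exists (tclass3 G (b^-1 * (a * 1), a * (b^-1 * 1), b^-1 * 1)).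
apply: imset_f; rewrite inE /=; apply/and5P; split.
- by rewrite Ceq cE; apply: (@inclass _ G a b Ha Hb aG bG [:: 2; 0]%N [:: 2; 0]%N [::]).
- by rewrite Ceq cE; apply: (@inclass _ G a b Ha Hb aG bG [:: 0; 2]%N [:: 2; 0]%N [:: 0]%N).
- by rewrite mulg1; apply: imset_f.
- rewrite eqEsubset; apply/andP; split.
    rewrite gen_subG; apply/subsetP => y; rewrite !inE => /orP [/orP [] |] /eqP ->;
    by repeat (apply: groupM || rewrite groupV || apply: group1 || assumption).
  rewrite -gen gen_subG; set H := (X in _ \subset X).
  have xH : b^-1 * (a * 1) \in H by apply: mem_gen; rewrite !inE eqxx.
  have zH : b^-1 * 1 \in H by apply: mem_gen; rewrite !inE eqxx ?orbT.
  have bH : b \in H by rewrite -[b]invgK -[b^-1]mulg1 groupV.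
  apply/subsetP => y; rewrite !inE => /orP [/orP [] |] /eqP ->.
  + by rewrite -[a]mulg1 -(mulKVg b (a * 1)) groupM.
  + by [].
  + by rewrite cE.
- by apply/eqP; exact: (@term_eq _ a b Ha Hb (TM (TM (TW [:: 2; 0]%N) (TW [:: 0; 2]%N)) (TW [:: 2]%N)) (TW [::]) isT).
Qed.
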